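(* Fix an integer $r\ge2$. There exist constants $d_0=d_0(r)>0$ and $K=K(r)>0$ such that for every $d>d_0$, every $\lambda\in[0,1]$ with $(r-1)d\lambda^2\le1$, and every BMS channel $P$, $\big|C_{\chi^2}(P^{\times(r-1)}\circ B_{r,\lambda})-s_{r,\lambda}(C_{\chi^2}(P))\big|\le K\lambda^3$, where $s_{r,\lambda}(x)=\lambda^2\cdot\frac12\big((1+x)^{r-1}-(1-x)^{r-1}\big)$.
   Context: $B_{r,\lambda}:\{\pm\}\to\{\pm\}^{r-1}$ is the kernel $B_{r,\lambda}(x|y)=\lambda+2^{-(r-1)}(1-\lambda)$ if $x_i=y$ for all $i$, and $2^{-(r-1)}(1-\lambda)$ otherwise. A channel $P:\{\pm\}\to\mathcal Y$ is BMS if there is a measurable involution $\sigma$ of $\mathcal Y$ with $P(E|+)=P(\sigma(E)|-)$. $P^{\times(r-1)}$ is the $(r-1)$-fold tensor power. $C_{\chi^2}(P)$ is the $\chi^2$-information between $X\sim\mathrm{Unif}(\{\pm\})$ and the output of $P$. *)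

(* Defs.v *)
From HB Require Import structures.
From mathcomp Require Import all_boot all_order all_algebra.
From mathcomp Require Import all_classical all_reals all_analysis.
Unset Printing Implicit Defensive.
Import Order.TTheory GRing.Theory Num.Theory.
Local Open Scope classical_set_scope.
Local Open Scope ring_scope.

(* Input alphabet {+,-} is encoded as bool: true = +, false = -. *)

Section Defs.
Context {R : realType}.

(* The kernel B_{r,lambda} : {+-} -> {+-}^(r-1), written with n = r - 1:
   B(x | y) = lam + 2^-n (1 - lam) if x_i = y for all i, 2^-n (1-lam) else. *)
Definition Bker (n : nat) (lam : R) (y : bool) (x : n.-tuple bool) : R :=
  if [forall i : 'I_n, tnth x i == y] then lam + (1 - lam) / 2 ^+ n
  else (1 - lam) / 2 ^+ n.

Context {dY : measure_display} {Y : measurableType dY}.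

(* A BMS channel P : {+-} -> Y, given by its densities p x = dP(.|x)/dnu with
   respect to a sigma-finite reference measure nu on Y, together with a
   measurable involution sigma with P(E|+) = P(sigma(E)|-). *)
Definition BMS_channel (nu : {measure set Y -> \bar R}) (p : bool -> Y -> R)
    (sigma : Y -> Y) : Prop :=
  [/\ sigma_finite [set: Y] nu,
      forall x, measurable_fun [set: Y] (p x),
      forall x y, 0 <= p x y,
      forall x, (\int[nu]_y (p x y)%:E = 1)%E &
      measurable_fun [set: Y] sigma /\ cancel sigma sigma /\
      forall E, measurable E ->
        (\int[nu]_(y in E) (p true y)%:E =
         \int[nu]_(y in sigma @` E) (p false y)%:E)%E].

(* Iterated integral against nu^{(x) n} on n.-tuple Y (equal, by Tonelli, to
   the integral w.r.t. the n-fold product measure for nonnegative integrands). *)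
Fixpoint iint (nu : {measure set Y -> \bar R}) (n : nat) :
    (n.-tuple Y -> \bar R) -> \bar R :=
  match n return (n.-tuple Y -> \bar R) -> \bar R with
  | 0 => fun F => F [tuple]
  | m.+1 => fun F => (\int[nu]_y iint nu m (fun t : m.-tuple Y => F [tuple of y :: t]))%E
  end.

(* Density (w.r.t. nu^{(x) n}) of the composite channel P^{x n} o B_{n+1,lam}:
   input x, B outputs z in {+-}^n, each z_i goes independently through P. *)
Definition comp_density (n : nat) (lam : R) (p : bool -> Y -> R)
    (x : bool) (t : n.-tuple Y) : R :=
  \sum_(z : n.-tuple bool) Bker n lam x z * \prod_(i < n) p (tnth z i) (tnth t i).

End Defs.
Arguments Bker {R} n lam y x.
Arguments comp_density {R dY Y} n lam p x t.

(* Pointwise density of chi^2(P_{XY} || P_X (x) P_Y) for X ~ Unif{+-} and a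
   binary-input channel with output densities q x: with qb = (q + + q -)/2,
   sum_x 1/2 * qb * (q x / qb - 1)^2   (0 where qb = 0). *)
Definition chi2_integrand {R : realType} {T : Type} (q : bool -> T -> R) (t : T) : R :=
  let qb := (q true t + q false t) / 2 in
  \sum_(x : bool) 2^-1 * (qb * (q x t / qb - 1) ^+ 2).

Definition Cchi2 {R : realType} {dY} {Y : measurableType dY}
    (nu : {measure set Y -> \bar R}) (p : bool -> Y -> R) : R :=
  fine (\int[nu]_y (chi2_integrand p y)%:E)%E.

Definition Cchi2_comp {R : realType} {dY} {Y : measurableType dY}
    (nu : {measure set Y -> \bar R}) (n : nat) (lam : R) (p : bool -> Y -> R) : R :=
  fine (iint nu n (fun t : n.-tuple Y => (chi2_integrand (comp_density n lam p) t)%:E)).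

Definition s_fun {R : realType} (r : nat) (lam x : R) : R :=
  lam ^+ 2 * (2^-1 * ((1 + x) ^+ (r - 1) - (1 - x) ^+ (r - 1))).

(* Main.v *)
Require Import Defs.
From HB Require Import structures.
From mathcomp Require Import all_boot all_order all_algebra.
From mathcomp Require Import all_classical all_reals all_analysis.
From mathcomp Require Import measurable_realfun.
From mathcomp Require Import ring lra zify.
Import Order.TTheory GRing.Theory Num.Theory.
Local Open Scope ring_scope.
Local Open Scope classical_set_scope.

Lemma measurable_inv (R : realType) : measurable_fun [set: R] (@GRing.inv R).
Proof.
rewrite -set_itvNyy (@itv_bndbnd_setU _ _ _ (BLeft 0))//.
apply/measurable_funU => //; split.
- apply: open_continuous_measurable_fun; first exact: interval_open.
  move=> x; rewrite inE/= in_itv/= => x0; apply: inv_continuous.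
  by rewrite lt_eqF.
- rewrite (@itv_bndbnd_setU _ _ _ (BRight 0))//; last by rewrite bnd_simp.
  apply/measurable_funU => //; split.
  + rewrite set_itv1. exact: measurable_fun_set1.
  + apply: open_continuous_measurable_fun; first exact: interval_open.
    move=> x; rewrite inE/= in_itv/= andbT => x0; apply: inv_continuous.
    by rewrite gt_eqF.
Qed.

Lemma key (R : realType) (lam a b P M : R) : 0 <= lam -> lam <= 2^-1 -> 0 <= P -> 1 <= M ->
  0 <= a -> a <= M * P -> 0 <= b -> b <= M * P ->
  forall qp qm f h, qp = lam * a + (1 - lam) * P -> qm = lam * b + (1 - lam) * P ->
  f = (qp - qm) ^+ 2 / (2 * (qp + qm)) ->
  h = lam ^+ 2 / 4 * (a ^+ 2 * P^-1) + - (lam ^+ 2 / 2) * (a * b * P^-1)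
           + lam ^+ 2 / 4 * (b ^+ 2 * P^-1) ->
  h - M ^+ 3 * lam ^+ 3 * P <= f <= h + M ^+ 3 * lam ^+ 3 * P.
Proof.
move=> l0 l2 P0 M1 a0 aM b0 bM qp qm f h Hqp Hqm Hf Hh.
have [P00|Pn0] := eqVneq P 0.
  subst P f h qp qm.
  have -> : a = 0 by apply/eqP; rewrite eq_le a0 andbT; rewrite mulr0 in aM.
  have -> : b = 0 by apply/eqP; rewrite eq_le b0 andbT; rewrite mulr0 in bM.
  rewrite ?(mulr0, mul0r, addr0, subr0, invr0, expr0n, oppr0) /=.
  by rewrite lexx.
have Pp : 0 < P by rewrite lt_def Pn0.
set Q := lam * (a + b) + 2 * (1 - lam) * P.
have QP : P <= Q by rewrite /Q; nra.
have Qp : 0 < Q by apply: lt_le_trans QP.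
have ef : f - h = lam ^+ 3 * ((a - b) ^+ 2 * (2 * P - a - b)) / (4 * Q * P).
  rewrite Hf Hh Hqp Hqm /Q; field.
  by rewrite Pn0 -/Q gt_eqF.
set W := (a - b) ^+ 2 * (2 * P - a - b).
have Wb : `|W| <= 2 * M ^+ 3 * P ^+ 3.
  rewrite /W normrM; have e1 : `|(a - b) ^+ 2| <= M ^+ 2 * P ^+ 2.
    rewrite normrX -exprMn; apply: lerXn2r; rewrite ?nnegrE ?mulr_ge0 //; try lra.
    rewrite ler_norml; apply/andP; split; nra.
  have e2 : `|2 * P - a - b| <= 2 * M * P by rewrite ler_norml; apply/andP; split; nra.
  have := ler_pM (normr_ge0 _) (normr_ge0 _) e1 e2.
  move/le_trans; apply; rewrite le_eqVlt; apply/orP; left; apply/eqP; ring.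
have D0 : 0 < 4 * Q * P by rewrite !mulr_gt0.
have DP : 4 * P ^+ 2 <= 4 * Q * P by nra.
have : `|f - h| <= M ^+ 3 * lam ^+ 3 * P.
  rewrite ef normrM normrV ?unitfE ?gt_eqF // (gtr0_norm D0) normrM.
  rewrite (ger0_norm (exprn_ge0 _ l0)) ler_pdivrMr //.
  have L3 : 0 <= lam ^+ 3 by rewrite exprn_ge0.
  have := ler_wpM2l L3 Wb; move/le_trans; apply.
  have M0 : 0 <= M by lra.
  have H : 0 <= M ^+ 3 * lam ^+ 3 * P by rewrite !mulr_ge0 // ?exprn_ge0.
  have X : 0 <= lam ^+ 3 * M ^+ 3 * P ^+ 3 by rewrite !mulr_ge0 // ?exprn_ge0.
  apply: le_trans (_ : _ <= M ^+ 3 * lam ^+ 3 * P * (4 * P ^+ 2)) _;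
    last by rewrite ler_wpM2l.
  rewrite -subr_ge0.
  have -> : M ^+ 3 * lam ^+ 3 * P * (4 * P ^+ 2) - lam ^+ 3 * (2 * M ^+ 3 * P ^+ 3)
    = 2 * (lam ^+ 3 * M ^+ 3 * P ^+ 3) by ring.
  by rewrite mulr_ge0.
rewrite ler_norml => /andP[h1 h2]; apply/andP; split; lra.
Qed.
Lemma sum_tuple_prod (R : realType) n (F : 'I_n -> bool -> R) :
  \sum_(z : n.-tuple bool) \prod_(i < n) F i (tnth z i) =
  \prod_(i < n) (F i true + F i false).
Proof.
rewrite (@reindex _ _ _ _ _ (fun f : {ffun 'I_n -> bool} => [tuple f i | i < n])) /=.
  under eq_bigr do under eq_bigr do rewrite tnth_mktuple.
  rewrite -bigA_distr_bigA; apply: eq_bigr => i _; exact: big_bool.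
apply: onW_bij; exists (fun z : n.-tuple bool => [ffun i => tnth z i]).
  by move=> f; apply/ffunP => i; rewrite ffunE tnth_mktuple.
by move=> z; apply: eq_from_tnth => i; rewrite tnth_mktuple ffunE.
Qed.

Lemma chi2_closed (R : realType) (T : Type) (q : bool -> T -> R) t :
  chi2_integrand q t = (q true t - q false t) ^+ 2 / (2 * (q true t + q false t)).
Proof.
rewrite /chi2_integrand big_bool /=.
set a := q true t; set b := q false t.
have [ab0|ab0] := eqVneq (a + b) 0.
  by rewrite ab0 !mul0r !mulr0 invr0 mulr0 addr0.
by field; rewrite ab0.
Qed.

Section S.
Context {R : realType} {dY : measure_display} {Y : measurableType dY}.

Lemma comp_closed n (lam : R) (p : bool -> Y -> R) x t :
  comp_density n lam p x t = lam * \prod_(i < n) p x (tnth t i) +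
    (1 - lam) * \prod_(i < n) ((p true (tnth t i) + p false (tnth t i)) / 2).
Proof.
rewrite /comp_density /Bker.
set z0 := [tuple x | i < n].
have E z : [forall i : 'I_n, tnth z i == x] = (z == z0).
  apply/forallP/eqP => [H|->]; last by move=> i; rewrite tnth_mktuple.
  by apply: eq_from_tnth => i; rewrite tnth_mktuple; apply/eqP.
under eq_bigr do rewrite E.
rewrite (bigD1 z0) //= eqxx.
under [\sum_(i | i != z0) _]eq_bigr => z zn do rewrite (ifN _ _ zn).
have := @sum_tuple_prod R n (fun i b => p b (tnth t i)).
rewrite (bigD1 z0) //= => H.
have -> : \sum_(i | i != z0) (1 - lam) / 2 ^+ n * \prod_(i0 < n) p (tnth i i0) (tnth t i0)
  = (1 - lam) / 2 ^+ n * \sum_(i | i != z0) \prod_(i0 < n) p (tnth i i0) (tnth t i0).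
  by rewrite mulr_sumr.
have -> : \sum_(i | i != z0) \prod_(i0 < n) p (tnth i i0) (tnth t i0) =
  \prod_(i < n) (p true (tnth t i) + p false (tnth t i)) -
  \prod_(i0 < n) p (tnth z0 i0) (tnth t i0) by rewrite -H addrC addrK.
have -> : \prod_(i0 < n) p (tnth z0 i0) (tnth t i0) = \prod_(i < n) p x (tnth t i).
  by apply: eq_bigr => i _; rewrite tnth_mktuple.
have -> : \prod_(i < n) ((p true (tnth t i) + p false (tnth t i)) / 2) =
   \prod_(i < n) (p true (tnth t i) + p false (tnth t i)) / 2 ^+ n.
  by rewrite big_split /= prodr_const card_ord exprVn.
ring.
Qed.
Variable nu : {measure set Y -> \bar R}.

Lemma int_mono (f g : Y -> \bar R) : (forall y, (f y <= g y)%E) ->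
  (\int[nu]_y f y <= \int[nu]_y g y)%E.
Proof.
move=> fg; rewrite /integral /=; apply: leeB; apply: le_ereal_sup.
- move=> _ [h hf <-]; exists h => // x; apply: le_trans (hf x) _.
  rewrite !patch_setT; apply: (@funepos_le _ _ setT); [move=> z _; exact: fg| exact: in_setT].
- move=> _ [h hf <-]; exists h => // x; apply: le_trans (hf x) _.
  rewrite !patch_setT; apply: (@funeneg_le _ _ setT); [move=> z _; exact: fg| exact: in_setT].
Qed.

Lemma iint_mono n (F G : n.-tuple Y -> \bar R) : (forall t, (F t <= G t)%E) ->
  (iint nu n F <= iint nu n G)%E.
Proof.
elim: n F G => [|n IH] F G FG /=; first exact: FG.
apply: int_mono => y; apply: IH => t; exact: FG.
Qed.

Lemma integrable_G (g : Y -> R) a : measurable_fun setT g -> (forall y, 0 <= g y) ->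
  (\int[nu]_y (g y)%:E = a%:E)%E -> nu.-integrable setT (fun y => (g y)%:E).
Proof.
move=> mg g0 ga; apply/integrableP; split; first exact/measurable_EFinP.
under eq_integral do rewrite gee0_abs ?lee_fin//.
by rewrite ga ltry.
Qed.

Lemma int_lin (I : finType) (G : I -> Y -> R) (al : I -> R) (c : I -> R) :
  (forall k, measurable_fun setT (G k)) -> (forall k y, 0 <= G k y) ->
  (forall k, \int[nu]_y (G k y)%:E = (al k)%:E)%E ->
  (\int[nu]_y (\sum_k c k * G k y)%:E = (\sum_k c k * al k)%:E)%E.
Proof.
move=> mG G0 Ga.
under eq_integral do rewrite -sumEFin.
rewrite integral_sum//; last first.
  move=> k; under eq_fun do rewrite EFinM.
  by apply: integrableZl => //; exact: integrable_G.
rewrite -sumEFin; apply: eq_bigr => k _.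
under eq_integral do rewrite EFinM.
by rewrite integralZl//; [rewrite Ga | exact: integrable_G].
Qed.

Lemma iint_nice (I : finType) (G : I -> Y -> R) (al : I -> R) :
  (forall k, measurable_fun setT (G k)) -> (forall k y, 0 <= G k y) ->
  (forall k, \int[nu]_y (G k y)%:E = (al k)%:E)%E ->
  forall n (c : I -> R),
  iint nu n (fun t => (\sum_k c k * \prod_(i < n) G k (tnth t i))%:E) =
  (\sum_k c k * al k ^+ n)%:E.
Proof.
move=> mG G0 Ga; elim=> [|n IH] c /=.
  by congr EFin; apply: eq_bigr => k _; rewrite big_ord0 expr0.
have E y : (fun t : n.-tuple Y =>
    (\sum_k c k * \prod_(i < n.+1) G k (tnth [tuple of y :: t] i))%:E) =
    (fun t => (\sum_k (c k * G k y) * \prod_(i < n) G k (tnth t i))%:E).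
  apply: funext => t; congr EFin; apply: eq_bigr => k _.
  rewrite big_ord_recl tnth0 mulrA; congr (_ * _).
  by apply: eq_bigr => i _; rewrite tnthS.
under eq_integral => y _ do rewrite E IH.
under eq_integral => y _ do under eq_bigr => k _ do rewrite mulrAC.
rewrite (@int_lin _ G al)//; congr EFin; apply: eq_bigr => k _.
by rewrite exprSr mulrA.
Qed.

Lemma int_fin (g h : Y -> R) (c al : R) :
  measurable_fun setT g -> measurable_fun setT h ->
  (forall y, 0 <= g y) -> (forall y, 0 <= h y) -> (forall y, g y <= c * h y) ->
  (\int[nu]_y (h y)%:E = al%:E)%E ->
  exists be, (\int[nu]_y (g y)%:E = be%:E)%E.
Proof.
move=> mg mh g0 h0 gh ha.
have H1 : (\int[nu]_y (g y)%:E <= \int[nu]_y (c * h y)%:E)%E.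
  apply: ge0_le_integral => //.
  - by move=> y _; rewrite lee_fin g0.
  - exact/measurable_EFinP.
  - apply/measurable_EFinP; apply: measurable_funM; [exact: measurable_cst | exact: mh].
  - by move=> y _; rewrite lee_fin gh.
have H2 : (\int[nu]_y (c * h y)%:E = (c * al)%:E)%E.
  under eq_integral do rewrite EFinM.
  by rewrite integralZl//; [rewrite ha | exact: (integrable_G h al mh h0 ha)].
exists (fine (\int[nu]_y (g y)%:E)); rewrite fineK//.
rewrite ge0_fin_numE; last by apply: integral_ge0 => y _; rewrite lee_fin g0.
by apply: le_lt_trans H1 _; rewrite H2 ltry.
Qed.

Lemma sum4 (F : nat -> R) : \sum_(k < 4) F k = F 0%N + F 1%N + F 2%N + F 3%N.
Proof. by rewrite !big_ord_recr big_ord0 /= add0r. Qed.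
End S.


Lemma frac_le (R : realType) (x y s : R) : 0 <= x -> 0 <= y -> y <= s ->
  x * y * (s / 2)^-1 <= 2 * x.
Proof.
move=> x0 y0 ys.
have [s0|s0] := eqVneq s 0.
  by rewrite s0 mul0r invr0 mulr0; lra.
have sp : 0 < s by rewrite lt_def s0 (le_trans y0).
rewrite invf_div mulrA ler_pdivrMr //; nra.
Qed.

Lemma alg1 (R : realType) (u v : R) : 0 <= u -> 0 <= v ->
  1 * (u ^+ 2 * ((u + v) / 2)^-1) + 2 * (u * v * ((u + v) / 2)^-1) +
  1 * (v ^+ 2 * ((u + v) / 2)^-1) + 0 * ((u + v) / 2) = 2 * u + 2 * v.
Proof.
move=> u0 v0; have [s0|s0] := eqVneq (u + v) 0.
  have u00 : u = 0 by lra.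
  have v00 : v = 0 by lra.
  by rewrite u00 v00 !(mul0r, mulr0, addr0, expr0n) /=.
by field; rewrite s0.
Qed.

Lemma alg2 (R : realType) (u v : R) : 0 <= u -> 0 <= v ->
  1 * (u ^+ 2 * ((u + v) / 2)^-1) + 0 * (u * v * ((u + v) / 2)^-1) +
  -1 * (v ^+ 2 * ((u + v) / 2)^-1) + 0 * ((u + v) / 2) = 2 * u + -2 * v.
Proof.
move=> u0 v0; have [s0|s0] := eqVneq (u + v) 0.
  have u00 : u = 0 by lra.
  have v00 : v = 0 by lra.
  by rewrite u00 v00 !(mul0r, mulr0, addr0, expr0n) /=.
by field; rewrite s0.
Qed.

Lemma alg3 (R : realType) (u v : R) :
  (u - v) ^+ 2 / (2 * (u + v)) =
  4^-1 * (u ^+ 2 * ((u + v) / 2)^-1) + - 2^-1 * (u * v * ((u + v) / 2)^-1) +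
  4^-1 * (v ^+ 2 * ((u + v) / 2)^-1) + 0 * ((u + v) / 2).
Proof.
have [s0|s0] := eqVneq (u + v) 0.
  by rewrite s0 !(mul0r, mulr0, addr0, invr0).
by field; rewrite s0.
Qed.

Theorem mainTheorem16 (R : realType) (r : nat) (hr : (2 <= r)%N) :
  exists d0 K : R, 0 < d0 /\ 0 < K /\
  forall (d lam : R), d0 < d -> 0 <= lam <= 1 ->
    (r - 1)%:R * d * lam ^+ 2 <= 1 ->
  forall (dY : measure_display) (Y : measurableType dY)
         (nu : {measure set Y -> \bar R}) (p : bool -> Y -> R) (sigma : Y -> Y),
    BMS_channel nu p sigma ->
    `| Cchi2_comp nu (r - 1) lam p - s_fun r lam (Cchi2 nu p) | <= K * lam ^+ 3.
Proof.
rewrite /s_fun.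
set n := (r - 1)%N.
have n1 : (1 <= n)%N by rewrite /n; lia.
exists 4, ((2 ^+ n) ^+ 3); split; first by rewrite ltr0n.
split; first by rewrite !exprn_gt0.
move=> d lam d4 /andP[l0 l1] hd dY Y nu p sigma [sf mp p0 pint _].
have n1R : 1 <= n%:R :> R by rewrite ler1n.
have lh : lam <= 2^-1.
  have h4 : 4 * lam ^+ 2 <= n%:R * d * lam ^+ 2.
    by apply: ler_wpM2r; [exact: exprn_ge0 | nra].
  nra.
pose a := p true; pose b := p false; pose pb y := (a y + b y) / 2.
pose Gn (k : nat) : Y -> R := match k with
  | 0 => fun y => a y ^+ 2 * (pb y)^-1
  | 1 => fun y => a y * b y * (pb y)^-1
  | 2 => fun y => b y ^+ 2 * (pb y)^-1
  | _ => pb end.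
have mpb : measurable_fun setT pb.
  apply: measurable_funM; last exact: measurable_cst.
  by apply: measurable_funD; exact: mp.
have mi : measurable_fun setT (fun y => (pb y)^-1).
  exact: measurableT_comp (measurable_inv R) mpb.
have mG (k : nat) : measurable_fun setT (Gn k).
  case: k => [|[|[|k]]] /=.
  - by apply: measurable_funM => //; apply: measurable_funX; exact: mp.
  - by apply: measurable_funM => //; apply: measurable_funM; exact: mp.
  - by apply: measurable_funM => //; apply: measurable_funX; exact: mp.
  - exact: mpb.
have a0 y : 0 <= a y by exact: p0.
have b0 y : 0 <= b y by exact: p0.
have pb0 y : 0 <= pb y by rewrite /pb divr_ge0 // addr_ge0.
have G0 (k : nat) y : 0 <= Gn k y.
  case: k => [|[|[|k]]] /=.
  - by apply: mulr_ge0; [exact: exprn_ge0 | rewrite invr_ge0].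
  - by apply: mulr_ge0; [exact: mulr_ge0 | rewrite invr_ge0].
  - by apply: mulr_ge0; [exact: exprn_ge0 | rewrite invr_ge0].
  - exact: pb0.
have ma : measurable_fun setT a by exact: mp.
have mb : measurable_fun setT b by exact: mp.
have pint' (x : bool) : (\int[nu]_y (p x y)%:E = ((fun=> 1 : R) x)%:E)%E by exact: pint.
have Ipb : (\int[nu]_y (pb y)%:E = 1%:E)%E.
  have -> : (fun y => (pb y)%:E) = (fun y => (\sum_(x : bool) 2^-1 * p x y)%:E).
    by apply: funext => y; rewrite big_bool /= /pb /a /b; congr EFin; field.
  rewrite (@int_lin _ _ _ nu bool p (fun=> 1)) //.
  by rewrite big_bool /=; congr EFin; field.
have Ia (k : nat) : exists be, (\int[nu]_y (Gn k y)%:E = be%:E)%E.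
  case: k => [|[|[|k]]].
  - apply: (@int_fin _ _ _ nu (Gn 0%N) a 2 1 (mG 0%N) ma (G0 0%N) a0); last exact: (pint true).
    by move=> y /=; rewrite expr2; apply: frac_le => //; rewrite lerDl.
  - apply: (@int_fin _ _ _ nu (Gn 1%N) a 2 1 (mG 1%N) ma (G0 1%N) a0); last exact: (pint true).
    by move=> y /=; apply: frac_le => //; rewrite lerDr.
  - apply: (@int_fin _ _ _ nu (Gn 2%N) b 2 1 (mG 2%N) mb (G0 2%N) b0); last exact: (pint false).
    by move=> y /=; rewrite expr2; apply: frac_le => //; rewrite lerDr.
  - by exists 1.
pose al (k : nat) := fine (\int[nu]_y (Gn k y)%:E).
have Gal (k : nat) : (\int[nu]_y (Gn k y)%:E = (al k)%:E)%E.
  by rewrite /al; have [be ->] := Ia k.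
have al3 : al 3%N = 1 by rewrite /al /= Ipb.
pose GI := fun k : 'I_4 => Gn k.
pose alI := fun k : 'I_4 => al k.
have mGI (k : 'I_4) : measurable_fun setT (GI k) by exact: mG.
have GI0 (k : 'I_4) y : 0 <= GI k y by exact: G0.
have GIal (k : 'I_4) : (\int[nu]_y (GI k y)%:E = (alI k)%:E)%E by exact: Gal.
have lin4 (c : nat -> R) : (\int[nu]_y (\sum_(k < 4) c k * Gn k y)%:E =
    (c 0%N * al 0%N + c 1%N * al 1%N + c 2%N * al 2%N + c 3%N * al 3%N)%:E)%E.
  have := @int_lin _ _ _ nu _ GI alI (fun k => c k) mGI GI0 GIal.
  by move=> ->; congr EFin; exact: (sum4 (fun k => c k * al k)).
pose cA : nat -> R := fun k => match k with 0 => 1 | 1 => 2 | 2 => 1 | _ => 0 end.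
pose cB : nat -> R := fun k => match k with 0 => 1 | 1 => 0 | 2 => -1 | _ => 0 end.
pose cC : nat -> R := fun k => match k with 0 => 4^-1 | 1 => - 2^-1 | 2 => 4^-1 | _ => 0 end.
have R1 : al 0%N + 2 * al 1%N + al 2%N = 4.
  have := lin4 cA.
  have -> : (fun y => (\sum_(k < 4) cA k * Gn k y)%:E) =
            (fun y => (\sum_(x : bool) 2 * p x y)%:E).
    apply: funext => y; rewrite (sum4 (fun k => cA k * Gn k y)) big_bool /=.
    congr EFin; exact: alg1.
  rewrite (@int_lin _ _ _ nu bool p (fun=> 1)) // big_bool /= => -[].
  rewrite al3 /cA; lra.
have R2 : al 0%N - al 2%N = 0.
  have := lin4 cB.
  have -> : (fun y => (\sum_(k < 4) cB k * Gn k y)%:E) =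
            (fun y => (\sum_(x : bool) (if x then 2 else -2) * p x y)%:E).
    apply: funext => y; rewrite (sum4 (fun k => cB k * Gn k y)) big_bool /=.
    congr EFin; exact: alg2.
  rewrite (@int_lin _ _ _ nu bool p (fun=> 1)) // big_bool /= => -[].
  rewrite al3 /cB; lra.
have R3 : Cchi2 nu p = al 0%N / 4 - al 1%N / 2 + al 2%N / 4.
  rewrite /Cchi2.
  have -> : (fun y => (chi2_integrand p y)%:E) =
            (fun y => (\sum_(k < 4) cC k * Gn k y)%:E).
    apply: funext => y; rewrite (sum4 (fun k => cC k * Gn k y)) /= chi2_closed.
    congr EFin; exact: alg3.
  by rewrite lin4 /= /cC; field.
have R3' : 4 * Cchi2 nu p = al 0%N - 2 * al 1%N + al 2%N by rewrite R3; field.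
set C := Cchi2 nu p in R3' *.
have A0 : al 0%N = 1 + C by lra.
have A1 : al 1%N = 1 - C by lra.
have A2 : al 2%N = 1 + C by lra.
set K := (2 ^+ n) ^+ 3.
set s := lam ^+ 2 * (2^-1 * ((1 + C) ^+ n - (1 - C) ^+ n)).
have Inice (c : nat -> R) :
    iint nu n (fun t => (\sum_(k < 4) c k * \prod_(i < n) Gn k (tnth t i))%:E) =
    (c 0%N * al 0%N ^+ n + c 1%N * al 1%N ^+ n + c 2%N * al 2%N ^+ n
      + c 3%N * al 3%N ^+ n)%:E.
  have := @iint_nice _ _ _ nu _ GI alI mGI GI0 GIal n (fun k => c k).
  by move=> ->; congr EFin; exact: (sum4 (fun k => c k * al k ^+ n)).
pose c1 : nat -> R := fun k => match k with 0 => lam ^+ 2 / 4 | 1 => - (lam ^+ 2 / 2)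
   | 2 => lam ^+ 2 / 4 | _ => - (K * lam ^+ 3) end.
pose c2 : nat -> R := fun k => match k with 0 => lam ^+ 2 / 4 | 1 => - (lam ^+ 2 / 2)
   | 2 => lam ^+ 2 / 4 | _ => K * lam ^+ 3 end.
have PW (t : n.-tuple Y) :
  \sum_(k < 4) c1 k * \prod_(i < n) Gn k (tnth t i) <=
    chi2_integrand (comp_density n lam p) t <=
  \sum_(k < 4) c2 k * \prod_(i < n) Gn k (tnth t i).
  set Pp := \prod_(i < n) a (tnth t i).
  set Pm := \prod_(i < n) b (tnth t i).
  set Pb := \prod_(i < n) pb (tnth t i).
  have E0 : \prod_(i < n) Gn 0%N (tnth t i) = Pp ^+ 2 * Pb^-1.
    by rewrite /= big_split /= prodrXl prodfV.
  have E1 : \prod_(i < n) Gn 1%N (tnth t i) = Pp * Pm * Pb^-1.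
    by rewrite /= big_split /= big_split /= prodfV.
  have E2 : \prod_(i < n) Gn 2%N (tnth t i) = Pm ^+ 2 * Pb^-1.
    by rewrite /= big_split /= prodrXl prodfV.
  have E3 : \prod_(i < n) Gn 3%N (tnth t i) = Pb by [].
  rewrite (sum4 (fun k => c1 k * \prod_(i < n) Gn k (tnth t i)))
          (sum4 (fun k => c2 k * \prod_(i < n) Gn k (tnth t i))) E0 E1 E2 E3 /c1 /c2.
  have Pb0 : 0 <= Pb by apply: prodr_ge0 => i _; exact: pb0.
  have P2 : \prod_(i < n) (2 * pb (tnth t i)) = 2 ^+ n * Pb.
    by rewrite big_split /= prodr_const card_ord.
  have Ppb : Pp <= 2 ^+ n * Pb.
    rewrite -P2; apply: ler_prod => i _; rewrite a0 /= /pb; have := b0 (tnth t i); lra.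
  have Pmb : Pm <= 2 ^+ n * Pb.
    rewrite -P2; apply: ler_prod => i _; rewrite b0 /= /pb; have := a0 (tnth t i); lra.
  have Pp0 : 0 <= Pp by apply: prodr_ge0 => i _; exact: a0.
  have Pm0 : 0 <= Pm by apply: prodr_ge0 => i _; exact: b0.
  have M1 : 1 <= 2 ^+ n :> R by rewrite exprn_ege1 // ler1n.
  have := @key R lam Pp Pm Pb (2 ^+ n) l0 lh Pb0 M1 Pp0 Ppb Pm0 Pmb
    (comp_density n lam p true t) (comp_density n lam p false t)
    (chi2_integrand (comp_density n lam p) t)
    (lam ^+ 2 / 4 * (Pp ^+ 2 * Pb^-1) + - (lam ^+ 2 / 2) * (Pp * Pm * Pb^-1)
           + lam ^+ 2 / 4 * (Pm ^+ 2 * Pb^-1))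
    (comp_closed n lam p true t) (comp_closed n lam p false t)
    (chi2_closed R _ (comp_density n lam p) t) erefl.
  move=> /andP[kl kh].
  apply/andP; split.
  - by apply: le_trans kl; rewrite le_eqVlt; apply/orP; left; apply/eqP; rewrite /K; ring.
  - by apply: le_trans kh _; rewrite le_eqVlt; apply/orP; left; apply/eqP; rewrite /K; ring.
have lo : (iint nu n (fun t => (\sum_(k < 4) c1 k * \prod_(i < n) Gn k (tnth t i))%:E) <=
    iint nu n (fun t => (chi2_integrand (comp_density n lam p) t)%:E))%E.
  by apply: iint_mono => t; rewrite lee_fin; case/andP: (PW t).
have hi : (iint nu n (fun t => (chi2_integrand (comp_density n lam p) t)%:E) <=
    iint nu n (fun t => (\sum_(k < 4) c2 k * \prod_(i < n) Gn k (tnth t i))%:E))%E.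
  by apply: iint_mono => t; rewrite lee_fin; case/andP: (PW t).
rewrite !Inice in lo hi.
have V1 : c1 0%N * al 0%N ^+ n + c1 1%N * al 1%N ^+ n + c1 2%N * al 2%N ^+ n
      + c1 3%N * al 3%N ^+ n = s - K * lam ^+ 3.
  rewrite /c1 A0 A1 A2 al3 expr1n /s /=.
  by set X1 := (1 + C) ^+ n; set X2 := (1 - C) ^+ n; field.
have V2 : c2 0%N * al 0%N ^+ n + c2 1%N * al 1%N ^+ n + c2 2%N * al 2%N ^+ n
      + c2 3%N * al 3%N ^+ n = s + K * lam ^+ 3.
  rewrite /c2 A0 A1 A2 al3 expr1n /s /=.
  by set X1 := (1 + C) ^+ n; set X2 := (1 - C) ^+ n; field.
rewrite V1 in lo; rewrite V2 in hi.
rewrite /Cchi2_comp -/n.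
move: lo hi; case: (iint nu n _) => [x| |] //=.
rewrite !lee_fin => lo hi; rewrite ler_norml; apply/andP; split; lra.
Qed.
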